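(* Let $k=n/m$ with $n,m$ coprime positive integers, let $q_c$ be an exponential factor all of whose exponents are $>k$, let $r=\mathrm{ram}(q_c)$, let $a,\hat a\in\mathbb C$, and let $b,\hat b$ be exponential factors of slope $<k$. Put $q=q_c+ax^k+b$ and $\hat q=q_c+\hat ax^k+\hat b$. Then $\langle q\rangle\neq\langle\hat q\rangle$ and $f_{q,\hat q}=k$ if and only if one of the following holds: (1) $m$ divides $r$ and $a\neq\hat a$; (2) $m$ does not divide $r$ and either (2a) exactly one of $a,\hat a$ is zero, or (2b) $a\ne0$, $\hat a\ne0$ and $a^N\neq\hat a^N$, where $N=\mathrm{lcm}(r,m)/r$. (Equivalently, in case (2), $a^N\ne\hat a^N$.)
   Context: Exponential factors: finite sums $q=\sum_ka_kx^k$, $a_k\in\mathbb C$, $k\in\mathbb Q_{>0}$; $E(q)$ = set of exponents with $a_k\ne0$; $\mathrm{slope}(q)=\max E(q)$ ($0$ if $q=0$); $\mathrm{ram}(q)$ = least $r\ge1$ with $q\in x^{1/r}\mathbb C[x^{1/r}]$. Galois operator $\sigma(\sum a_kx^k)=\sum a_ke^{-2\pi\sqrt{-1}k}x^k$; Stokes circle $\langle q\rangle=\{\sigma^i(q):i\in\mathbb Z\}$. Truncation $\tau_k(\sum a_{k'}x^{k'})=\sum_{k'\ge k}a_{k'}x^{k'}$. Common part/fission exponent: for $q,\hat q$ in distinct orbits, if some $k'\in E(q)$ has $\langle\tau_{k'}(q)\rangle=\langle\tau_{k'}(\hat q)\rangle$, let $k'$ be the smallest, and put $q_c'=\tau_{k'}(q)$,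 $\hat q_c'=\tau_{k'}(\hat q)$; else $q_c'=\hat q_c'=0$. The fission exponent is $f_{q,\hat q}=\max(\mathrm{slope}(q-q_c'),\mathrm{slope}(\hat q-\hat q_c'))$. *)

(* Defs.v *)
From Stdlib Require Reals.
From mathcomp Require Import all_boot all_order all_algebra.
From mathcomp Require Import boolp.
From mathcomp Require Import Rstruct.
From mathcomp.real_closed Require Export complex.
Set Implicit Arguments. Unset Strict Implicit. Unset Printing Implicit Defensive.
Import Order.TTheory GRing.Theory Num.Theory.
Local Open Scope ring_scope.

Notation C := (Rdefinitions.R)[i].

(* An exponential factor is a finite formal sum  sum_j a_j x^(k_j), given as the
   list of its terms (k_j, a_j); exponents must be positive rationals (ef_ok).
   Two exponential factors are equal when their coefficient functions agree. *)
Definition EF := seq (rat * C).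

Definition ef_ok (q : EF) : bool := all (fun p => 0 < p.1) q.

Definition coef (q : EF) (e : rat) : C := \sum_(p <- q | p.1 == e) p.2.

Definition inExps (q : EF) (e : rat) : bool := coef q e != 0.

(* slope(q) = max E(q), 0 if E(q) is empty (exponents are positive) *)
Definition slope (q : EF) : rat := \big[Num.max/0]_(p <- q | inExps q p.1) p.1.

(* q belongs to x^(1/r) C[x^(1/r)] *)
Definition in_ring_r (q : EF) (r : nat) : Prop :=
  forall e, inExps q e -> exists j : nat, (0 < j)%N /\ e = j%:R / r%:R.

Definition is_ram (q : EF) (r : nat) : Prop :=
  [/\ (0 < r)%N, in_ring_r q r &
      forall r', (0 < r')%N -> in_ring_r q r' -> (r <= r')%N].

Definition eminus (e : rat) : C :=
  Complex (Rtrigo_def.cos (2 * Rtrigo1.PI * ratr e)) (- Rtrigo_def.sin (2 * Rtrigo1.PI * ratr e)).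
Definition eplus (e : rat) : C :=
  Complex (Rtrigo_def.cos (2 * Rtrigo1.PI * ratr e)) (Rtrigo_def.sin (2 * Rtrigo1.PI * ratr e)).

Definition sigma (f : rat -> C) : rat -> C := fun e => f e * eminus e.
Definition sigma_inv (f : rat -> C) : rat -> C := fun e => f e * eplus e.

Definition sigmaz (i : int) (f : rat -> C) : rat -> C :=
  match i with
  | Posz n => iter n sigma f
  | Negz n => iter n.+1 sigma_inv f
  end.

Definition circle (q : EF) : (rat -> C) -> Prop :=
  fun f => exists i : int, f = sigmaz i (coef q).

Definition trunc (k : rat) (q : EF) : EF := [seq p <- q | k <= p.1].

Definition subEF (q q' : EF) : EF := q ++ [seq (p.1, - p.2) | p <- q'].

Definition common_exps (q qh : EF) : seq rat :=
  [seq p.1 | p <- q & inExps q p.1 &&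
     `[< circle (trunc p.1 q) = circle (trunc p.1 qh) >] ].

Definition fission (q qh : EF) : rat :=
  match common_exps q qh with
  | [::] => Num.max (slope q) (slope qh)
  | k0 :: _ =>
      let k' := \big[Num.min/k0]_(x <- common_exps q qh) x in
      Num.max (slope (subEF q (trunc k' q))) (slope (subEF qh (trunc k' qh)))
  end.

(* Main.v *)
Require Import Defs.
From mathcomp Require Import all_boot all_order all_algebra.
From mathcomp Require Import boolp Rstruct.
From mathcomp.real_closed Require Import complex.
From mathcomp Require Import ring lra zify.
From Stdlib Require Reals.
Local Notation R := Rdefinitions.R.
Local Notation PI := Rtrigo1.PI.
Local Notation cos := Rtrigo_def.cos.
Local Notation sin := Rtrigo_def.sin.
Import Order.TTheory GRing.Theory Num.Theory.
Local Open Scope ring_scope.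

Lemma two_IZR : (Rdefinitions.IZR (BinNums.Zpos (BinNums.xO BinNums.xH)) : R) = 2%:R.
Proof. by rewrite (IZRposE (BinNums.xO BinNums.xH)) INRE. Qed.

Lemma eminus_add (x y : rat) : eminus (x + y) = eminus x * eminus y.
Proof.
rewrite /eminus rmorphD /= mulrDr cosD sinD.
rewrite /GRing.mul /=. congr (Complex _ _); rewrite /GRing.mul /= ?RmultE ?RminusE ?RplusE.
  by rewrite mulrNN.
by rewrite mulrN mulNr -opprD addrC.
Qed.

Lemma eminus0 : eminus 0 = 1.
Proof. by rewrite /eminus rmorph0 mulr0 Rtrigo_def.cos_0 Rtrigo_def.sin_0 oppr0. Qed.

Lemma eminus1 : eminus 1 = 1.
Proof. by rewrite /eminus rmorph1 mulr1 -two_IZR Rtrigo1.cos_2PI Rtrigo1.sin_2PI oppr0. Qed.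

Lemma eplusE x : eplus x = eminus (- x).
Proof. by rewrite /eplus /eminus rmorphN /= mulrN Rtrigo1.cos_neg Rtrigo1.sin_neg opprK. Qed.

Lemma eminusN x : eminus (- x) * eminus x = 1.
Proof. by rewrite -eminus_add addNr eminus0. Qed.

Lemma eminus_nat n x : eminus (n%:R * x) = eminus x ^+ n.
Proof.
elim: n => [|n IH]; first by rewrite mul0r eminus0 expr0.
by rewrite -addn1 natrD mulrDl mul1r eminus_add IH exprD expr1.
Qed.

Lemma eminus_int (z : int) : eminus z%:~R = 1.
Proof.
have P n : eminus n%:R = 1 by rewrite -[n%:R]mulr1 eminus_nat eminus1 expr1n.
case: z => n; first by rewrite -pmulrn P.
rewrite NegzE mulrNz -pmulrn.
by have := eminusN n.+1%:R; rewrite P mulr1.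
Qed.

Lemma eminus_eq1 x : eminus x = 1 -> exists z : int, x = z%:~R.
Proof.
move=> Hx; exists (Num.floor x).
set y := x - (Num.floor x)%:~R.
have Hy : eminus y = 1.
  by rewrite /y eminus_add -mulrNz eminus_int Hx mulr1.
have /andP[y0 y1] : (0 <= y) && (y < 1).
  have /andP[h1 h2] := floor_itv x.
  by rewrite /y subr_ge0 h1 /= ltrBlDl; move: h2; rewrite intrD.
move: Hy; rewrite /eminus; set t := (2 * PI * ratr y) => Hy.
have [Hc Hs] : cos t = 1 /\ sin t = 0.
  case: Hy => -> /eqP; rewrite oppr_eq0 => /eqP ->; done.
have Ppos : (0 < PI).
  by have /RltP := Rtrigo1.PI_RGT_0.
have ry0 : (0 <= ratr y :> R) by rewrite ler0q.
have ry1 : (ratr y < 1 :> R) by rewrite -(rmorph1 (@ratr R)) ltr_rat.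
have t0 : (0 <= t) by rewrite /t mulr_ge0 // mulr_ge0 // ltW.
have t1 : (t < 2 * PI) by rewrite /t gtr_pMr // mulr_gt0.
have [T|[T|T]] := Rtrigo1.sin_eq_O_2PI_0 t (elimT RleP t0) (elimT RleP (ltW t1)) Hs.
- have : ratr y = 0 :> R.
    move: T; rewrite /t => /eqP; rewrite mulf_eq0 (gt_eqF (mulr_gt0 _ Ppos)) //=.
    by move/eqP.
  move/eqP; rewrite -(rmorph0 (@ratr R)) (inj_eq (fmorph_inj (@ratr R))) => /eqP y00.
  by apply/eqP; rewrite -subr_eq0 -/y y00.
- move: Hc; rewrite T Rtrigo1.cos_PI => H; have H1 : (-1 : R) = 1 by exact H.
  by exfalso; move: H1; clear; lra.
- by move: t1; rewrite T two_IZR ltxx.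
Qed.

Lemma iter_sigma n f e : iter n sigma f e = f e * eminus e ^+ n.
Proof.
elim: n => [|n IH]; first by rewrite expr0 mulr1.
by rewrite iterS /sigma IH exprSr mulrA.
Qed.

Lemma iter_sigma_inv n f e : iter n sigma_inv f e = f e * eplus e ^+ n.
Proof.
elim: n => [|n IH]; first by rewrite expr0 mulr1.
by rewrite iterS /sigma_inv IH exprSr mulrA.
Qed.

Lemma sigmazE (i : int) f e : sigmaz i f e = f e * eminus (i%:~R * e).
Proof.
case: i => n; rewrite /sigmaz.
  by rewrite iter_sigma -pmulrn eminus_nat.
by rewrite iter_sigma_inv eplusE NegzE mulrNz mulNr -mulrN -pmulrn eminus_nat.
Qed.

Lemma sigmazD (i j : int) f : sigmaz i (sigmaz j f) = sigmaz (i + j) f.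
Proof.
apply: funext => e; rewrite !sigmazE -mulrA -eminus_add -mulrDl -intrD addrC.
done.
Qed.

Lemma sigmaz0 f : sigmaz 0 f = f.
Proof. done. Qed.

Lemma coef_nil e : coef [::] e = 0.
Proof. by rewrite /coef big_nil. Qed.

Lemma coef_cons p L e : coef (p :: L) e = (if p.1 == e then p.2 else 0) + coef L e.
Proof. by rewrite /coef big_cons; case: ifP => _; rewrite ?add0r. Qed.

Lemma coef_cat L1 L2 e : coef (L1 ++ L2) e = coef L1 e + coef L2 e.
Proof. by rewrite /coef big_cat. Qed.

Lemma coef_trunc t L e : coef (trunc t L) e = if t <= e then coef L e else 0.
Proof.
elim: L => [|p L IH] /=; first by rewrite coef_nil; case: ifP.
rewrite coef_cons; case: ifP => tp; rewrite ?coef_cons IH.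
  case: eqP => [<-|_]; first by rewrite tp.
  by rewrite add0r; case: ifP => _; rewrite ?add0r.
case: eqP => [<-|_]; first by rewrite tp.
by rewrite add0r; case: ifP => _; rewrite ?add0r.
Qed.

Lemma coef_sub L L' e : coef (subEF L L') e = coef L e - coef L' e.
Proof.
rewrite /subEF coef_cat; congr (_ + _).
by rewrite /coef big_map /= sumrN.
Qed.

Lemma coef_nz_entry L e : coef L e != 0 -> exists2 p, p \in L & p.1 = e.
Proof.
elim: L => [|p L IH]; first by rewrite coef_nil eqxx.
rewrite coef_cons; case: (p.1 =P e) => [pe _|_]; first by exists p; rewrite ?mem_head.
rewrite add0r => /IH [p' p'L <-]; exists p' => //; by rewrite in_cons p'L orbT.
Qed.

Lemma bmax_ge (L : EF) (P : pred rat) p :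
  p \in L -> P p.1 -> p.1 <= \big[Num.max/0]_(p <- L | P p.1) p.1.
Proof.
elim: L => [|p0 L IH] //; rewrite in_cons big_cons => /orP [/eqP <- ->|pL Pp].
  by rewrite le_max lexx.
by case: ifP => _; rewrite ?le_max IH ?orbT.
Qed.

Lemma bmax_le (L : EF) (P : pred rat) x : 0 <= x ->
  (forall p, p \in L -> P p.1 -> p.1 <= x) ->
  \big[Num.max/0]_(p <- L | P p.1) p.1 <= x.
Proof.
move=> x0 H; rewrite big_seq_cond; apply: (big_ind (fun y => y <= x)) => //.
  by move=> y z yx zx; rewrite ge_max yx zx.
by move=> p /andP[pL Pp]; apply: H.
Qed.

Lemma bmax_cases (L : EF) (P : pred rat) :
  let y := \big[Num.max/0]_(p <- L | P p.1) p.1 in y = 0 \/ P y.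
Proof.
apply: (big_ind (fun y => y = 0 \/ P y)); first by left.
  by move=> y z Hy Hz; rewrite maxEle; case: ifP.
by move=> p Pp; right.
Qed.

Lemma slope_ge q e : coef q e != 0 -> e <= slope q.
Proof.
move=> H; have [p pq pe] := coef_nz_entry _ _ H.
rewrite -pe; apply: (bmax_ge q (inExps q)) => //.
by rewrite /inExps pe.
Qed.

Lemma slope_le q x : 0 <= x -> (forall e, coef q e != 0 -> e <= x) -> slope q <= x.
Proof. by move=> x0 H; apply: bmax_le => // p _; apply: H. Qed.

Lemma slope_cases q : slope q = 0 \/ coef q (slope q) != 0.
Proof. exact: (bmax_cases q (inExps q)). Qed.

Lemma ram_div qc r (i : int) : is_ram qc r ->
  (forall e, inExps qc e -> exists z : int, i%:~R * e = z%:~R) -> (r%:Z %| i)%Z.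
Proof.
case=> r0 rr rmin Hi.
have [->|i0] := eqVneq i 0; first exact: dvdz0.
pose g := gcdn r `|i|.
have g0 : (0 < g)%N by rewrite gcdn_gt0 r0.
suff : (r <= g)%N.
  move=> rg; have gr : (g <= r)%N by apply: dvdn_leq => //; exact: dvdn_gcdl.
  have gE : g = r by apply/eqP; rewrite eqn_leq rg gr.
  by rewrite /dvdz /=; apply/gcdn_idPl.
apply: rmin => // e He.
have [j [j0 ej]] := rr e He.
have [z ez] := Hi e He.
have [u [v uv]] := Bezoutz r i.
have eg : e * g%:R = (u * j%:Z + v * z)%:~R.
  have -> : (g%:R : rat) = (gcdz r i)%:~R by [].
  rewrite -uv !intrD !intrM -ez ej -!pmulrn.
  have rn : (r%:R : rat) != 0 by rewrite pnatr_eq0 -lt0n.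
  by field.
have e0 : 0 < e by rewrite ej divr_gt0 // ltr0n.
have gn : (0 < g%:R :> rat) by rewrite ltr0n.
move: eg; case: (u * j%:Z + v * z) => [w|w] eg.
  exists w; split.
    by rewrite lt0n; apply: contraTneq (mulr_gt0 e0 gn) => w0; rewrite eg w0 ltxx.
  by move: eg; rewrite -pmulrn => <-; rewrite mulfK // gt_eqF.
have := mulr_gt0 e0 gn; rewrite eg NegzE mulrNz oppr_gt0 -pmulrn.
by rewrite ltrn0.
Qed.

Lemma intk r n m (t : int) : (0 < r)%N -> (0 < m)%N ->
  exists z : int, ((lcmn r m %/ r)%:R * ((t * r%:Z)%:~R * (n%:R / m%:R)) : rat) = z%:~R.
Proof.
move=> r0 m0; exists (t * ((lcmn r m %/ m) * n)%:Z).
have E : ((lcmn r m %/ r)%:R * r%:R : rat) = (lcmn r m %/ m)%:R * m%:R.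
  by rewrite -!natrM !divnK // ?dvdn_lcml ?dvdn_lcmr.
have mn : (m%:R : rat) != 0 by rewrite pnatr_eq0 -lt0n.
rewrite !intrM -!pmulrn natrM.
transitivity (t%:~R * ((lcmn r m %/ r)%:R * r%:R) * n%:R / (m%:R : rat)); first by field.
rewrite E; field => //.
Qed.

Lemma keyK qc r n m (i : int) (a ah : C) : (0 < m)%N -> is_ram qc r ->
  (forall e, inExps qc e -> eminus (i%:~R * e) = 1) ->
  ah = a * eminus (i%:~R * (n%:R / m%:R)) ->
  ah ^+ (lcmn r m %/ r) = a ^+ (lcmn r m %/ r).
Proof.
move=> m0 rr Hi ->.
have rdiv : (r%:Z %| i)%Z.
  by apply: (ram_div qc) => // e He; apply: eminus_eq1; apply: Hi.
have r0 : (0 < r)%N by case: rr.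
rewrite exprMn -eminus_nat -(divzK rdiv).
have [z ->] := intk r n m (i %/ r)%Z r0 m0.
by rewrite eminus_int mulr1.
Qed.

Lemma ndiv r n m (d : nat) : (0 < r)%N -> (0 < m)%N -> coprime n m ->
  eminus ((d%:Z * r%:Z)%:~R * (n%:R / m%:R)) = 1 -> (lcmn r m %/ r %| d)%N.
Proof.
move=> r0 m0 cnm /eminus_eq1 [z Hz].
have mn : (m%:R : rat) != 0 by rewrite pnatr_eq0 -lt0n.
have E : ((d * r * n)%N%:Z)%:~R = (z * m%:Z)%:~R :> rat.
  rewrite -!pmulrn !natrM intrM -!pmulrn -Hz intrM -!pmulrn; by field.
have /intr_inj E' := E.
have dv : (m %| d * r * n)%N.
  have : (m%:Z %| (d * r * n)%N%:Z)%Z by rewrite E' dvdz_mull // dvdzz.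
  by rewrite /dvdz.
have cmn : coprime m n by rewrite coprime_sym.
have dv2 : (m %| d * r)%N by rewrite -(Gauss_dvdr (d * r) cmn) mulnC.
have dv3 : (lcmn r m %| d * r)%N by rewrite dvdn_lcm dv2 dvdn_mull.
by rewrite -(dvdn_pmul2r r0) divnK // dvdn_lcml.
Qed.

Lemma eminus_sub x y : eminus x = eminus y -> eminus (x - y) = 1.
Proof. by move=> H; rewrite eminus_add H mulrC eminusN. Qed.

Lemma rootsK r n m (a ah : C) : (0 < r)%N -> (0 < m)%N -> coprime n m ->
  a != 0 -> a ^+ (lcmn r m %/ r) = ah ^+ (lcmn r m %/ r) ->
  exists i : int, (r%:Z %| i)%Z /\ ah = a * eminus (i%:~R * (n%:R / m%:R)).
Proof.
move=> r0 m0 cnm a0 HN.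
set N := (lcmn r m %/ r)%N in HN.
set k : rat := n%:R / m%:R.
have N0 : (0 < N)%N.
  by rewrite divn_gt0 // dvdn_leq ?lcmn_gt0 ?r0 ?m0 // dvdn_lcml.
pose om (j : nat) := eminus ((j%:Z * r%:Z)%:~R * k).
pose zeta := ah / a.
have zN : zeta ^+ N = 1 by rewrite /zeta exprMn exprVn -HN mulfV // expf_neq0.
have omN j : om j ^+ N = 1.
  by rewrite /om -eminus_nat; have [z ->] := intk r n m j r0 m0; rewrite eminus_int.
have inj : {in iota 0 N &, injective om}.
  move=> j1 j2; rewrite !mem_iota !add0n => /andP[_ j1N] /andP[_ j2N] E.
  wlog lt12 : j1 j2 E j1N j2N / (j1 <= j2)%N.
    move=> W; case: (leqP j1 j2) => h; first exact: W.
    by apply/esym/W => //; apply: ltnW.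
  move: lt12; rewrite leq_eqVlt => /orP [/eqP //|lt12].
  have := ndiv r n m (j2 - j1) r0 m0 cnm.
  have H1 : eminus ((((j2 - j1)%N)%:Z * r%:Z)%:~R * k) = 1.
    rewrite -subzn; last exact: ltnW.
    rewrite mulrBl intrB mulrBl; apply: eminus_sub; symmetry; exact E.
  move=> /(_ H1) dv.
  have h : (N <= j2 - j1)%N by apply: dvdn_leq; [rewrite subn_gt0|exact: dv].
  exfalso; move: h j2N; clear; lia.
have [/mapP [j _ zj] | zn] := boolP (zeta \in [seq om j | j <- iota 0 N]).
  exists (j%:Z * r%:Z); split; first by rewrite dvdz_mull // dvdzz.
  rewrite -[eminus _]/(om j) -zj /zeta mulrC (divfK a0).
  reflexivity.
exfalso.
have P0 : ('X^N - 1 : {poly C}) != 0 by rewrite -size_poly_eq0 size_Xn_sub_1.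
have AR : all (root ('X^N - 1)) (zeta :: [seq om j | j <- iota 0 N]).
  apply/allP => x; rewrite in_cons => /orP [/eqP ->|/mapP [j _ ->]].
    by rewrite rootE !hornerE zN subrr.
  by rewrite rootE !hornerE omN subrr.
have UR : uniq (zeta :: [seq om j | j <- iota 0 N]).
  by rewrite /= zn map_inj_in_uniq // iota_uniq.
have := max_poly_roots P0 AR UR.
by rewrite size_Xn_sub_1 // /= size_map size_iota ltnn.
Qed.

Lemma bigmin_le (s : seq rat) x0 x : x \in s -> \big[Num.min/x0]_(y <- s) y <= x.
Proof.
elim: s => [|y s IH] //; rewrite in_cons big_cons => /orP [/eqP ->|xs].
  by rewrite ge_min lexx.
by rewrite ge_min IH ?orbT.
Qed.

Lemma bigmin_gt (s : seq rat) x0 c : c < x0 -> (forall y, y \in s -> c < y) ->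
  c < \big[Num.min/x0]_(y <- s) y.
Proof.
move=> cx H; rewrite big_seq; apply: (big_ind (fun y => c < y)) => //.
by move=> y z cy cz; rewrite lt_min cy cz.
Qed.

Lemma circle_coef A B : circle A = circle B -> exists i, coef B = sigmaz i (coef A).
Proof.
move=> H; have : circle B (coef B) by exists 0.
by rewrite -H => -[i Hi]; exists i.
Qed.

Lemma coef_circle A B i : coef B = sigmaz i (coef A) -> circle A = circle B.
Proof.
move=> H; apply: funext => f; apply: propext; split => -[j ->].
  by exists (j - i); rewrite H sigmazD addrNK.
by exists (j + i); rewrite H sigmazD.
Qed.

Lemma slope_subtrunc X t :
  slope (subEF X (trunc t X)) = 0 \/ slope (subEF X (trunc t X)) < t.
Proof.
case: (slope_cases (subEF X (trunc t X))) => [->|]; first by left.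
rewrite coef_sub coef_trunc; case: ifP => [_|/negbT]; first by rewrite subrr eqxx.
by rewrite -ltNge => h _; right.
Qed.

Lemma slope_nz X k : 0 < k -> slope X = k -> coef X k != 0.
Proof. by move=> k0 E; case: (slope_cases X) => [|]; rewrite E // => h; move: k0; rewrite h ltxx. Qed.

Lemma slope_eqk X k : 0 < k -> (forall e, coef X e != 0 -> e <= k) ->
  slope X <= k /\ (coef X k != 0 -> slope X = k).
Proof.
move=> k0 H; have sl : slope X <= k by apply: slope_le => //; apply: ltW.
split => // nz; apply/eqP; rewrite eq_le sl; exact: slope_ge.
Qed.

Lemma max_eqk (x y k : rat) : x <= k -> y <= k -> (x = k \/ y = k) -> Num.max x y = k.
Proof. by move=> xk yk [->|->]; [rewrite max_l | rewrite max_r]. Qed.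

Lemma coefq_facts qc k a b : (forall e, inExps qc e -> k < e) -> slope b < k ->
  [/\ forall e, k < e -> coef (qc ++ (k,a)::b) e = coef qc e,
      coef (qc ++ (k,a)::b) k = a &
      forall e, e < k -> coef (qc ++ (k,a)::b) e = coef b e].
Proof.
move=> Hqc sb.
have Fb e : coef b e != 0 -> e < k by move=> h; exact: le_lt_trans (slope_ge b e h) sb.
have Fq e : coef qc e != 0 -> k < e by apply: Hqc.
have cE e : coef (qc ++ (k,a)::b) e = coef qc e + ((if k == e then a else 0) + coef b e).
  by rewrite coef_cat coef_cons.
split.
- move=> e ke; rewrite cE (lt_eqF ke) add0r.
  case: (eqVneq (coef b e) 0) => [->|/Fb h]; first by rewrite addr0.
  by move: (lt_trans h ke); rewrite ltxx.
- rewrite cE eqxx.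
  case: (eqVneq (coef b k) 0) => [->|/Fb h]; last by move: h; rewrite ltxx.
  case: (eqVneq (coef qc k) 0) => [->|/Fq h]; last by move: h; rewrite ltxx.
  by rewrite add0r addr0.
- move=> e ek; rewrite cE (gt_eqF ek) add0r.
  case: (eqVneq (coef qc e) 0) => [->|/Fq h]; first by rewrite add0r.
  by move: (lt_trans h ek); rewrite ltxx.
Qed.

Theorem mainTheorem6 (n m : nat) (qc b bh : EF) (a ah : C) (r : nat) :
  (0 < n)%N -> (0 < m)%N -> coprime n m ->
  ef_ok qc -> ef_ok b -> ef_ok bh ->
  (forall e, inExps qc e -> (n%:R / m%:R : rat) < e) ->
  is_ram qc r ->
  slope b < n%:R / m%:R -> slope bh < n%:R / m%:R ->
  let k : rat := n%:R / m%:R in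
  let q : EF := qc ++ (k, a) :: b in
  let qh : EF := qc ++ (k, ah) :: bh in
  let N : nat := (lcmn r m %/ r)%N in
  (circle q <> circle qh /\ fission q qh = k) <->
  (((m %| r)%N /\ a != ah) \/
   (~~ (m %| r)%N /\
     (((a == 0) (+) (ah == 0)) \/ [/\ a != 0, ah != 0 & a ^+ N != ah ^+ N]))).
Proof.
move=> n0 m0 cnm _ _ _ Hqc rr sb sbh k q qh N.
have r0 : (0 < r)%N by case: rr.
have k0 : 0 < k by rewrite /k divr_gt0 // ltr0n.
have N0 : (0 < N)%N.
  by rewrite /N divn_gt0 // dvdn_leq ?lcmn_gt0 ?r0 ?m0 // dvdn_lcml.
have [qgt qk qlt] := coefq_facts qc k a b Hqc sb.
have [hgt hk hlt] := coefq_facts qc k ah bh Hqc sbh.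
rewrite -/q in qgt qk qlt; rewrite -/qh in hgt hk hlt.
have KG : forall i : int, (forall e, k <= e -> coef qh e = coef q e * eminus (i%:~R * e)) ->
    ah ^+ N = a ^+ N.
  move=> i Hi; apply: (keyK qc r n m i a ah m0 rr).
    move=> e He; have ke := Hqc e He.
    have := Hi e (ltW ke); rewrite hgt // qgt // => E.
    apply: (mulfI He); rewrite mulr1; exact: esym E.
  by have := Hi k (lexx k); rewrite hk qk.
have KT : forall t, t <= k -> circle (trunc t q) = circle (trunc t qh) -> ah ^+ N = a ^+ N.
  move=> t tk /circle_coef [i Hi]; apply: (KG i) => e ke.
  have := congr1 (fun f => f e) Hi; rewrite /= sigmazE !coef_trunc (le_trans tk ke).
  done.
have CE : forall i : int, (r%:Z %| i)%Z -> ah = a * eminus (i%:~R * k) ->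
    circle (trunc k q) = circle (trunc k qh).
  move=> i ri Ha; apply: (coef_circle _ _ i); apply: funext => e.
  rewrite sigmazE !coef_trunc; case: ifP => [ke|_]; last by rewrite mul0r.
  move: ke; rewrite le_eqVlt => /orP [/eqP <-|ke]; first by rewrite hk qk.
  rewrite hgt // qgt //.
  case: (eqVneq (coef qc e) 0) => [->|He]; first by rewrite mul0r.
  have [_ rr' _] := rr; have [j [_ ej]] := rr' e He.
  rewrite -(divzK ri) ej.
  have -> : (((i %/ r)%Z * r%:Z)%:~R * (j%:R / r%:R) : rat) = ((i %/ r)%Z * j%:Z)%:~R.
    have rn : (r%:R : rat) != 0 by rewrite pnatr_eq0 -lt0n.
    rewrite !intrM -!pmulrn; field; exact: rn.
  by rewrite eminus_int mulr1.
have CS : forall e, coef qc e != 0 -> e \in common_exps q qh.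
  move=> e He; have ke := Hqc e He.
  have qe : coef q e != 0 by rewrite qgt.
  have [p pq pe] := coef_nz_entry q e qe.
  rewrite /common_exps -pe; apply: map_f; rewrite mem_filter pq andbT.
  rewrite /inExps pe qe /=; apply/asboolP.
  apply: (coef_circle _ _ 0); apply: funext => e'; rewrite sigmaz0 !coef_trunc.
  case: ifP => // ee'; have ke' := lt_le_trans ke ee'.
  by rewrite hgt // qgt.
have CA : fission q qh = k -> a != 0 \/ ah != 0.
  rewrite /fission; case: (common_exps q qh) => [|c0 cs].
    rewrite maxEle; case: ifP => _ /(slope_nz _ _ k0); [rewrite hk|rewrite qk]; by [right|left].
  set k' := \big[Num.min/c0]_(x <- _) x.
  have H X : slope (subEF X (trunc k' X)) = k -> coef X k != 0.
    move=> /(slope_nz _ _ k0); rewrite coef_sub coef_trunc.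
    by case: ifP => _; [rewrite subrr eqxx | rewrite subr0].
  rewrite maxEle; case: ifP => _ /H; [rewrite hk|rewrite qk]; by [right|left].
have Z0 : (0 : C) ^+ N = 0 by rewrite expr0n gtn_eqF.
split.
- move=> [Hc Hf].
  have HaN : a ^+ N != ah ^+ N.
    apply/negP => /eqP E.
    case: (eqVneq a 0) => [a0|a0].
      have ah0 : ah = 0.
        have : ah ^+ N == 0 by rewrite -E a0 Z0.
        by rewrite expf_eq0 N0 /= => /eqP.
      by case: (CA Hf); rewrite ?a0 ?ah0 eqxx.
    have [i [ri Ha]] := rootsK r n m a ah r0 m0 cnm a0 E.
    have Ck := CE i ri Ha.
    have kin : k \in common_exps q qh.
      rewrite /common_exps; apply/mapP; exists (k,a) => //; rewrite mem_filter.
      apply/andP; split; last by rewrite mem_cat mem_head orbT.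
      by rewrite /inExps /= qk a0 /=; apply/asboolP.
    move: Hf kin; rewrite /fission; case: (common_exps q qh) => [|c0 cs] //= Hf kin.
    set k' := \big[Num.min/c0]_(x <- _) x in Hf.
    have k'k : k' <= k by apply: bigmin_le.
    have L X : slope (subEF X (trunc k' X)) < k.
      case: (slope_subtrunc X k') => [->//|h]; exact: lt_le_trans h k'k.
    have := L q; have := L qh; move: Hf; rewrite maxEle; case: ifP => _ ->; rewrite ltxx.
      by [].
    by [].
  case: (boolP (m %| r)%N) => mr.
    by left; split => //; apply: contra HaN => /eqP ->.
  right; split => //.
  case: (eqVneq a 0) => [a0|a0]; case: (eqVneq ah 0) => [h0|h0].
  + by move: HaN; rewrite a0 h0 eqxx.
  1-3: first [by left | by right; split | by move: HaN; rewrite a0 h0 eqxx].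
- move=> H.
  have HaN : a ^+ N != ah ^+ N.
    case: H => [[mr aah]|[_ [X|[_ _ //]]]].
      have N1 : N = 1%N by rewrite /N (lcmn_idPl mr) divnn r0.
      by rewrite N1 !expr1.
    case: (eqVneq a 0) X => [a0|a0]; case: (eqVneq ah 0) => [h0|h0] //= _.
      by rewrite a0 Z0 eq_sym expf_neq0.
    by rewrite h0 Z0 expf_neq0.
  have Aor : a != 0 \/ ah != 0.
    case: (eqVneq a 0) => [a0|a0]; last by left.
    case: (eqVneq ah 0) => [h0|h0]; last by right.
    by move: HaN; rewrite a0 h0 eqxx.
  split.
    move=> Hc; have [i Hi] := circle_coef _ _ Hc.
    move: HaN; rewrite (KG i) ?eqxx //.
    by move=> e _; rewrite Hi sigmazE.
  have CG : forall t, t \in common_exps q qh -> k < t.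
    move=> t /mapP [p]; rewrite mem_filter => /andP [/andP [_ /asboolP Hc] _] ->.
    rewrite ltNge; apply/negP => tk; move: HaN; rewrite (KT p.1 tk Hc) eqxx.
    by [].
  have FIN : forall X Y, (forall e, coef X e != 0 -> e <= k) -> coef X k = a ->
      (forall e, coef Y e != 0 -> e <= k) -> coef Y k = ah ->
      Num.max (slope X) (slope Y) = k.
    move=> X Y NX Xk NY Yk.
    have [sX sXk] := slope_eqk X k k0 NX.
    have [sY sYk] := slope_eqk Y k k0 NY.
    apply: max_eqk => //; case: Aor => [a0|h0];
      [left; apply: sXk; rewrite Xk | right; apply: sYk; rewrite Yk] => //.
  rewrite /fission; case E2: (common_exps q qh) => [|c0 cs].
    have NB Z (HZ : forall e, k < e -> coef Z e = coef qc e) e : coef Z e != 0 -> e <= k.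
      move=> nz; rewrite leNgt; apply/negP => ke.
      by have := CS e; rewrite -HZ // E2 => /(_ nz).
    by apply: FIN => //; apply: NB.
  set k' := \big[Num.min/c0]_(x <- _) x.
  have CG' y : y \in c0 :: cs -> k < y by rewrite -E2; apply: CG.
  have kk' : k < k'.
    by apply: bigmin_gt => [|y yin]; apply: CG'; rewrite ?mem_head ?in_cons ?yin ?orbT.
  have NB Z (HZ : forall e, k < e -> coef Z e = coef qc e) e :
      coef (subEF Z (trunc k' Z)) e != 0 -> e <= k.
    rewrite coef_sub coef_trunc; case: ifP => [_|/negbT]; first by rewrite subrr eqxx.
    rewrite -ltNge subr0 => ek' nz; rewrite leNgt; apply/negP => ke.
    have := CS e; rewrite -HZ // E2 => /(_ nz) /(bigmin_le _ c0).
    by rewrite -/k' leNgt ek'.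
  have SK Z : coef (subEF Z (trunc k' Z)) k = coef Z k.
    by rewrite coef_sub coef_trunc (lt_geF kk') subr0.
  by apply: FIN; rewrite ?SK //; apply: NB.
Qed.
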